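(* Let $M$ and $N$ be weight sequences satisfying $\mu_k\le\nu_k$ for all $k$ and $$\exists C>0\ \forall k\in\mathbb{N}_{>0}:\ \sum_{\ell\ge k}\frac1{\nu_\ell}\le C\frac{k}{\mu_k}.$$ Then there is $C'>0$ such that $\int_1^\infty\frac{\omega_N(tu)}{u^2}du\le C'\omega_M(t)+C'$ for all $t>0$.
   Context: A weight sequence is given by an increasing sequence $1=\mu_0\le\mu_1\le\cdots$ via $M_k=\mu_0\cdots\mu_k$, with $M_k^{1/k}\to\infty$; analogously $\nu\leftrightarrow N$. $\omega_M(t)=\sup_{k\in\mathbb{N}}\log(t^k/M_k)$ for $t>0$. *)

(* Defs.v *)
From Stdlib Require Import Reals Lra ClassicalEpsilon.
Open Scope R_scope.

Fixpoint Mseq (mu : nat -> R) (k : nat) : R :=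
  match k with
  | O => mu O
  | S j => Mseq mu j * mu (S j)
  end.

Definition weight_seq (mu : nat -> R) : Prop :=
  mu O = 1 /\
  (forall k, mu k <= mu (S k)) /\
  cv_infty (fun k => Rpower (Mseq mu k) (/ INR k)).

Definition Rsup (E : R -> Prop) : R :=
  epsilon (inhabits 0) (fun s => is_lub E s).

Definition omega (mu : nat -> R) (t : R) : R :=
  Rsup (fun y => exists k : nat, y = ln (t ^ k / Mseq mu k)).

Definition improper_int_1_inf (f : R -> R) (L : R) : Prop :=
  (forall X, 1 <= X -> inhabited (Riemann_integrable f 1 X)) /\
  (forall eps, 0 < eps -> exists X0, 1 <= X0 /\
     forall X (pr : Riemann_integrable f 1 X), X0 <= X ->
       Rabs (RiemannInt pr - L) < eps).

(* Main.v *)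
Require Import Defs.
From Stdlib Require Import Reals Lra Lia ClassicalEpsilon Classical.
From Coquelicot Require Import Coquelicot.
Open Scope R_scope.


Definition lp (y : R) : R := (ln y + Rabs (ln y)) / 2.

Lemma lp_ge0 y : 0 <= lp y.
Proof. unfold lp. pose proof (Rle_abs (-(ln y))). rewrite Rabs_Ropp in H. lra. Qed.
Lemma lp_ge_ln y : ln y <= lp y.
Proof. unfold lp. pose proof (Rle_abs (ln y)). lra. Qed.
Lemma lp_pos y : 0 <= ln y -> lp y = ln y.
Proof. intro H. unfold lp. rewrite Rabs_pos_eq; lra. Qed.
Lemma lp_neg y : ln y <= 0 -> lp y = 0.
Proof. intro H. unfold lp. rewrite Rabs_left1; lra. Qed.
Lemma ln_nonneg y : 1 <= y -> 0 <= ln y.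
Proof. intro. rewrite <- ln_1. apply ln_le; lra. Qed.
Lemma ln_nonpos y : 0 < y -> y <= 1 -> ln y <= 0.
Proof. intros. rewrite <- ln_1. apply ln_le; lra. Qed.

Fixpoint P (w : nat -> R) (s : R) (J : nat) : R :=
  match J with O => 0 | S j => P w s j + lp (s / w (S j)) end.

Definition Lt (w : nat -> R) (s : R) (k : nat) : R := ln (s ^ k / Mseq w k).

Section W.
Variable w : nat -> R.
Hypothesis w0 : w O = 1.
Hypothesis wmon : forall k, w k <= w (S k).

Lemma w_ge1 : forall k, 1 <= w k.
Proof. induction k. lra. specialize (wmon k). lra. Qed.

Lemma w_mono : forall i j, (i <= j)%nat -> w i <= w j.
Proof. intros i j H. induction H. lra. specialize (wmon m). lra. Qed.

Lemma M_pos : forall k, 0 < Mseq w k.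
Proof. induction k; simpl. rewrite w0; lra. pose proof (w_ge1 (S k)). nra. Qed.

Lemma Lt_0 s : Lt w s 0 = 0.
Proof. unfold Lt. simpl. rewrite w0. replace (1/1) with 1 by field. apply ln_1. Qed.

Lemma Lt_S s k : 0 < s -> Lt w s (S k) = Lt w s k + ln (s / w (S k)).
Proof.
  intro Hs. unfold Lt. pose proof (M_pos k). pose proof (w_ge1 (S k)).
  assert (0 < s ^ k) by (apply pow_lt; lra).
  rewrite <- ln_mult. f_equal. simpl. field. split; lra.
  apply Rdiv_lt_0_compat; lra. apply Rdiv_lt_0_compat; lra.
Qed.

Lemma Lt_le_P s k : 0 < s -> Lt w s k <= P w s k.
Proof.
  intro Hs. induction k. rewrite Lt_0. simpl. lra.
  rewrite Lt_S by lra. simpl. pose proof (lp_ge_ln (s / w (S k))). lra.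
Qed.

Lemma P_mono s : forall n m, (n <= m)%nat -> P w s n <= P w s m.
Proof. intros n m H. induction H. lra. simpl. pose proof (lp_ge0 (s / w (S m))). lra. Qed.

Lemma P_stable s J : 0 < s -> (forall j, (J < j)%nat -> s <= w j) ->
  forall n, P w s n <= P w s J.
Proof.
  intros Hs HJ n. destruct (Compare_dec.le_lt_dec n J). apply P_mono; auto.
  assert (forall m, P w s (J + m) = P w s J).
  { induction m. rewrite Nat.add_0_r. auto.
    rewrite Nat.add_succ_r. simpl. rewrite IHm. rewrite lp_neg. lra.
    pose proof (w_ge1 (S (J+m))). apply ln_nonpos.
    apply Rdiv_lt_0_compat; lra.
    specialize (HJ (S (J+m))%nat ltac:(lia)).
    apply (Rmult_le_reg_r (w (S (J + m)))). lra. field_simplify; lra. }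
  replace n with (J + (n - J))%nat by lia. rewrite H. lra.
Qed.

Lemma all_le s J : 0 < s -> (forall j, (1 <= j <= J)%nat -> w j <= s) -> P w s J = Lt w s J.
Proof.
  intros Hs. induction J; intro H. simpl. rewrite Lt_0. auto.
  simpl. rewrite Lt_S by lra. rewrite IHJ by (intros; apply H; lia).
  rewrite lp_pos. auto. apply ln_nonneg. pose proof (w_ge1 (S J)).
  specialize (H (S J) ltac:(lia)).
  apply (Rmult_le_reg_r (w (S J))). lra. field_simplify; lra.
Qed.

Lemma P_attained s J : 0 < s -> exists k, Lt w s k = P w s J.
Proof.
  intro Hs. induction J. exists O. rewrite Lt_0. auto.
  destruct (Rle_lt_dec (w (S J)) s).
  - exists (S J). rewrite all_le; auto. intros j Hj. pose proof (w_mono j (S J) ltac:(lia)). lra.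
  - destruct IHJ as [k Hk]. exists k. simpl. rewrite lp_neg. lra.
    pose proof (w_ge1 (S J)). apply ln_nonpos. apply Rdiv_lt_0_compat; lra.
    apply (Rmult_le_reg_r (w (S J))). lra. field_simplify; lra.
Qed.

Hypothesis wunb : forall B, exists k, B < w k.

Lemma w_eventually B : exists J, forall j, (J < j)%nat -> B <= w j.
Proof. destruct (wunb B) as [k Hk]. exists k. intros j Hj. pose proof (w_mono k j ltac:(lia)). lra. Qed.

Lemma omega_eq s J : 0 < s -> (forall j, (J < j)%nat -> s <= w j) -> omega w s = P w s J.
Proof.
  intros Hs HJ.
  set (E := fun y => exists k : nat, y = ln (s ^ k / Mseq w k)).
  assert (Hl : is_lub E (P w s J)).
  { split.
    - intros y [k ->]. pose proof (Lt_le_P s k Hs). pose proof (P_stable s J Hs HJ k).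
      unfold Lt in H. lra.
    - intros b Hb. destruct (P_attained s J Hs) as [k Hk]. rewrite <- Hk. apply Hb. exists k. auto. }
  unfold omega, Rsup. fold E.
  pose proof (epsilon_spec (inhabits 0) (fun s0 => is_lub E s0) (ex_intro _ _ Hl)) as H2.
  destruct H2 as [H2a H2b]. destruct Hl as [Hla Hlb].
  apply Rle_antisym. apply H2b. auto. apply Hlb. auto.
Qed.

Lemma omega_ge s k : 0 < s -> Lt w s k <= omega w s.
Proof.
  intro Hs. destruct (w_eventually s) as [J HJ]. rewrite (omega_eq s J Hs HJ).
  pose proof (Lt_le_P s k Hs). pose proof (P_stable s J Hs HJ k). lra.
Qed.

Lemma omega_ge0 s : 0 < s -> 0 <= omega w s.
Proof. intro Hs. pose proof (omega_ge s 0 Hs). rewrite Lt_0 in H. auto. Qed.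

End W.

Lemma weight_unb w : weight_seq w -> forall B, exists k, B < w k.
Proof.
  intros [w0 [wmon winf]] B. apply NNPP. intro H.
  assert (HB : forall k, w k <= B). { intro k. apply Rnot_lt_le. intro. apply H. eauto. }
  assert (B1 : 1 <= B) by (rewrite <- w0; auto).
  assert (HM : forall k, ln (Mseq w k) <= INR k * ln B).
  { induction k. simpl. rewrite w0, ln_1. lra.
    simpl Mseq. pose proof (w_ge1 w w0 wmon (S k)). pose proof (M_pos w w0 wmon k).
    rewrite ln_mult by lra. rewrite S_INR. pose proof (ln_le (w (S k)) B ltac:(lra) (HB (S k))). rewrite Rmult_plus_distr_r. lra. }
  destruct (winf B) as [N HN]. specialize (HN (S N) ltac:(lia)).
  unfold Rpower in HN.
  assert (exp (/ INR (S N) * ln (Mseq w (S N))) <= B).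
  { assert (/ INR (S N) * ln (Mseq w (S N)) <= ln B).
    { specialize (HM (S N)). pose proof (lt_0_INR (S N) ltac:(lia)).
      apply (Rmult_le_reg_l (INR (S N))). auto. rewrite <- Rmult_assoc, Rinv_r by lra. lra. }
    destruct (Rle_lt_or_eq_dec _ _ H0). left. rewrite <- (exp_ln B) by lra. apply exp_increasing; auto.
    rewrite e, exp_ln; lra. }
  lra.
Qed.


Lemma cont_lp y : 0 < y -> continuous lp y.
Proof.
  intro Hy. unfold lp.
  apply (continuous_mult (fun x => ln x + Rabs (ln x)) (fun _ => / 2)).
  apply (continuous_plus ln (fun x => Rabs (ln x))).
  apply continuous_ln; auto.
  apply continuous_Rabs_comp. apply continuous_ln; auto.
  apply continuous_const.
Qed.

Lemma cont_div2 f u : continuous f u -> 0 < u -> continuous (fun u => f u / u ^ 2) u.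
Proof.
  intros Hf Hu.
  apply (continuous_mult f (fun u => / u ^ 2)). auto.
  apply continuous_Rinv_comp.
  apply (continuous_mult (fun u => u) (fun u => u * 1)). apply continuous_id.
  apply (continuous_mult (fun u => u) (fun u => 1)). apply continuous_id. apply continuous_const.
  apply pow_nonzero. lra.
Qed.

Lemma cont_lin_lp a u : 0 < a -> 0 < u -> continuous (fun u => lp (a * u)) u.
Proof.
  intros Ha Hu. apply (continuous_comp (fun u => a * u) lp).
  apply (continuous_mult (fun _ => a) (fun u => u)). apply continuous_const. apply continuous_id.
  apply cont_lp. nra.
Qed.

Lemma cont_P w t J u : (forall j, 0 < w j) -> 0 < t -> 0 < u -> continuous (fun u => P w (t * u) J) u.
Proof.
  intros Hw Ht Hu. induction J; simpl.
  apply continuous_const.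
  apply (continuous_plus (fun u => P w (t * u) J) (fun u => lp (t * u / w (S J)))). auto.
  apply (continuous_ext (fun u => lp ((t / w (S J)) * u))).
  intro x. f_equal. field. specialize (Hw (S J)); lra.
  apply cont_lin_lp; auto. specialize (Hw (S J)). apply Rdiv_lt_0_compat; lra.
Qed.

Section IB.
Variable a : R.
Hypothesis Ha : 0 < a.
Definition fa u := lp (a * u) / u ^ 2.
Definition HH u := - (ln (a * u) + 1) / u.
Definition dH u := ln (a * u) / u ^ 2.

Lemma ex_fa p q : 0 < p -> p <= q -> ex_RInt fa p q.
Proof.
  intros. apply (@ex_RInt_continuous R_CompleteNormedModule). intros z Hz. rewrite Rmin_left in Hz by lra. rewrite Rmax_right in Hz by lra.
  apply cont_div2. apply cont_lin_lp; lra. lra.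
Qed.

Lemma intH p q : 0 < p -> p <= q -> RInt dH p q = HH q - HH p.
Proof.
  intros Hp Hpq. apply is_RInt_unique.
  apply (is_RInt_derive HH dH p q).
  - intros x Hx. rewrite Rmin_left in Hx by lra. rewrite Rmax_right in Hx by lra.
    unfold HH, dH. auto_derive. repeat split; nra. field. split; nra.
  - intros x Hx. rewrite Rmin_left in Hx by lra. rewrite Rmax_right in Hx by lra.
    unfold dH. apply (cont_div2 (fun u => ln (a * u))). 
    apply (continuous_comp (fun u => a * u) ln).
    apply (continuous_mult (fun _ => a) (fun u => u)). apply continuous_const. apply continuous_id.
    apply continuous_ln. nra. lra.
Qed.

Lemma fa_zero p q : 1 <= p -> p <= q -> a * q <= 1 -> RInt fa p q = 0.
Proof.
  intros Hp Hpq Hq. rewrite (RInt_ext fa (fun _ => 0)). rewrite RInt_const. unfold scal; simpl; unfold mult; simpl; ring.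
  intros x Hx. rewrite Rmin_left in Hx by lra. rewrite Rmax_right in Hx by lra.
  unfold fa. rewrite lp_neg. unfold Rdiv. apply Rmult_0_l. apply ln_nonpos; nra.
Qed.

Lemma fa_dH p q : 0 < p -> p <= q -> 1 <= a * p -> RInt fa p q = RInt dH p q.
Proof.
  intros Hp Hpq Hq. apply RInt_ext.
  intros x Hx. rewrite Rmin_left in Hx by lra. rewrite Rmax_right in Hx by lra.
  unfold fa, dH. rewrite lp_pos. auto. apply ln_nonneg; nra.
Qed.

Lemma IntB X : 1 <= X -> RInt fa 1 X <= a /\ RInt fa 1 X <= lp a + 1.
Proof.
  intro HX.
  assert (Hln : ln a + 1 <= a). { pose proof (exp_ineq1_le (ln a)) as Hq. rewrite exp_ln in Hq; lra. }
  destruct (Rle_lt_dec 1 a).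
  - rewrite fa_dH, intH by lra. unfold HH.
    rewrite lp_pos by (apply ln_nonneg; lra).
    assert (0 <= (ln (a * X) + 1) / X).
    { apply Rdiv_le_0_compat. pose proof (ln_nonneg (a * X) ltac:(nra)). lra. lra. }
    replace (a * 1) with a by ring. unfold Rdiv at 2. rewrite Rinv_1. 
    split; unfold Rdiv in *; lra.
  - rewrite (lp_neg a) by (apply ln_nonpos; lra).
    destruct (Rle_lt_dec (a * X) 1).
    + rewrite fa_zero by lra. lra.
    + assert (Hia : 1 <= / a). { rewrite <- Rinv_1. apply Rinv_le_contravar; lra. }
      assert (Hx : / a <= X). { apply (Rmult_le_reg_l a). auto. rewrite Rinv_r; lra. }
      rewrite <- (RInt_Chasles fa 1 (/ a) X) by (apply ex_fa; lra).
      rewrite fa_zero; try lra. 2: { rewrite Rinv_r; lra. }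
      rewrite fa_dH by (try rewrite Rinv_r; lra).
      rewrite intH by (try apply Rinv_0_lt_compat; lra). unfold HH.
      rewrite Rinv_r by lra. rewrite ln_1.
      assert (0 <= (ln (a * X) + 1) / X).
      { apply Rdiv_le_0_compat. pose proof (ln_nonneg (a * X) ltac:(nra)). lra. lra. }
      replace ((- (0 + 1) / / a)) with (- a) by (field; lra).
      change (plus 0 (- (ln (a * X) + 1) / X - - a)) with (0 + (- (ln (a * X) + 1) / X - - a)).
      unfold Rdiv in *. split; lra.
Qed.
End IB.


Fixpoint Ssum (b : nat -> R) (J : nat) : R :=
  match J with O => 0 | S j => Ssum b j + b (S j) end.

Lemma ex_Pint w t J X : (forall j, 0 < w j) -> 0 < t -> 1 <= X ->
  ex_RInt (fun u => P w (t * u) J / u ^ 2) 1 X.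
Proof.
  intros. apply (@ex_RInt_continuous R_CompleteNormedModule). intros z Hz.
  rewrite Rmin_left in Hz by lra. rewrite Rmax_right in Hz by lra.
  apply (cont_div2 (fun u => P w (t * u) J)). apply cont_P; auto; lra. lra.
Qed.

Lemma ex_term (w : nat -> R) t (j : nat) X : (forall j, 0 < w j) -> 0 < t -> 1 <= X ->
  ex_RInt (fun u => lp (t * u / w j) / u ^ 2) 1 X.
Proof.
  intros. apply (@ex_RInt_continuous R_CompleteNormedModule). intros z Hz.
  rewrite Rmin_left in Hz by lra. rewrite Rmax_right in Hz by lra.
  apply (cont_div2 (fun u => lp (t * u / w j))).
  apply (continuous_ext (fun u => lp ((t / w j) * u))).
  intro x. f_equal. field. specialize (H j); lra.
  apply cont_lin_lp. apply Rdiv_lt_0_compat; auto. lra. lra.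
Qed.

Lemma int_P w t b X : (forall j, 0 < w j) -> 0 < t -> 1 <= X ->
  (forall j, RInt (fun u => lp (t * u / w (S j)) / u ^ 2) 1 X <= b (S j)) ->
  forall J, RInt (fun u => P w (t * u) J / u ^ 2) 1 X <= Ssum b J.
Proof.
  intros Hw Ht HX Hb J. induction J; simpl.
  - rewrite (RInt_ext _ (fun _ => 0)). rewrite RInt_const. unfold scal; simpl; unfold mult; simpl. lra.
    intros. unfold Rdiv. apply Rmult_0_l.
  - rewrite (RInt_ext _ (fun u => plus (P w (t * u) J / u ^ 2) (lp (t * u / w (S J)) / u ^ 2))).
    rewrite (@RInt_plus R_CompleteNormedModule (fun u => P w (t * u) J / u ^ 2) (fun u => lp (t * u / w (S J)) / u ^ 2)).
    change (plus ?x ?y) with (x + y). specialize (Hb J). lra.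
    apply ex_Pint; auto. apply ex_term; auto.
    intros. change (plus ?x ?y) with (x + y). unfold Rdiv. apply Rmult_plus_distr_r.
Qed.

Lemma k0_ex (m : nat -> R) c : (forall k, m k <= m (S k)) -> (forall B, exists k, B < m k) ->
  exists k0, (forall j, (1 <= j <= k0)%nat -> m j <= c) /\ c < m (S k0).
Proof.
  intros Hmon Hunb. apply NNPP. intro H.
  assert (forall n j, (1 <= j <= n)%nat -> m j <= c).
  { induction n; intros j Hj. lia.
    destruct (Nat.eq_dec j (S n)). subst j.
    apply Rnot_lt_le. intro. apply H. exists n. split; auto. apply IHn. lia. }
  destruct (Hunb c) as [k Hk]. specialize (H0 (S k) (S k) ltac:(lia)). specialize (Hmon k). lra.
Qed.


Lemma lp_le y z : ln y <= z -> 0 <= z -> lp y <= z.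
Proof.
  intros. destruct (Rle_dec 0 (ln y)). rewrite lp_pos; auto. rewrite lp_neg; lra.
Qed.

Theorem lemma5p7 (mu nu : nat -> R) :
  weight_seq mu -> weight_seq nu ->
  (forall k, mu k <= nu k) ->
  (exists C, 0 < C /\ forall k : nat, (1 <= k)%nat ->
     exists s, Un_cv (fun n => sum_f_R0 (fun j => / nu (k + j)%nat) n) s /\
               s <= C * INR k / mu k) ->
  exists C', 0 < C' /\ forall t, 0 < t ->
    exists L, improper_int_1_inf (fun u => omega nu (t * u) / u ^ 2) L /\
              L <= C' * omega mu t + C'.
Proof.
  intros Wm Wn Hmn [C [HC Hs]].
  pose proof (weight_unb mu Wm) as munb. pose proof (weight_unb nu Wn) as nunb.
  destruct Wm as [mu0 [mumon _]]. destruct Wn as [nu0 [numon _]].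
  pose proof (w_ge1 mu mu0 mumon) as mu1. pose proof (w_ge1 nu nu0 numon) as nu1.
  assert (nupos : forall j, 0 < nu j) by (intro j; specialize (nu1 j); lra).
  set (e := exp 1).
  assert (He : 0 < e) by apply exp_pos.
  assert (He1 : ln e = 1) by apply ln_exp.
  exists (2 + C * e). split. nra.
  intros t Ht.
  destruct (k0_ex mu (t / e) mumon munb) as [k0 [Hk0a Hk0b]].
  destruct (Hs (S k0) ltac:(lia)) as [s0 [Hs0cv Hs0le]].
  set (A0 := Lt mu t k0).
  set (b := fun j => if Nat.leb j k0 then ln (t / mu j) + 1 else t / nu j).
  assert (Hln1 : forall j, (1 <= j <= k0)%nat -> 1 <= ln (t / mu j)).
  { intros j Hj. rewrite <- He1. apply ln_le. auto.
    specialize (Hk0a j Hj). specialize (mu1 j).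
    assert (e * mu j <= t).
    { replace t with (e * (t / e)) at 1 by (field; lra). apply Rmult_le_compat_l; lra. }
    apply (Rmult_le_reg_r (mu j)). lra. unfold Rdiv. rewrite Rmult_assoc, Rinv_l; lra. }
  assert (Hlow : forall n, (n <= k0)%nat -> Ssum b n <= 2 * Lt mu t n /\ INR n <= Lt mu t n).
  { induction n; intro Hn. simpl. rewrite Lt_0 by auto. lra.
    simpl Ssum. rewrite Lt_S by auto. rewrite S_INR.
    specialize (IHn ltac:(lia)). specialize (Hln1 (S n) ltac:(lia)).
    assert (b (S n) = ln (t / mu (S n)) + 1).
    { unfold b. replace (Nat.leb (S n) k0) with true. auto. symmetry. apply Nat.leb_le. lia. }
    rewrite H. lra. }
  assert (bpos : forall j, 0 <= b (S j)).
  { intro j. unfold b. destruct (Nat.leb (S j) k0) eqn:E.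
    apply Nat.leb_le in E. specialize (Hln1 (S j) ltac:(lia)). lra.
    specialize (nupos (S j)). apply Rlt_le. apply Rdiv_lt_0_compat; lra. }
  assert (Smono : forall n m, (n <= m)%nat -> Ssum b n <= Ssum b m).
  { intros n m H. induction H. lra. simpl. specialize (bpos m). lra. }
  set (f := fun j => / nu (S k0 + j)%nat).
  assert (Htail : forall m, Ssum b (S (k0 + m)) = Ssum b k0 + t * sum_f_R0 f m).
  { induction m.
    - rewrite Nat.add_0_r. simpl. unfold b, f.
      replace (Nat.leb (S k0) k0) with false by (symmetry; apply Nat.leb_gt; lia).
      rewrite Nat.add_0_r. unfold Rdiv. ring.
    - change (Ssum b (S (k0 + S m))) with (Ssum b (k0 + S m) + b (S (k0 + S m))).
      rewrite Nat.add_succ_r. rewrite IHm. simpl sum_f_R0. unfold b, f.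
      replace (Nat.leb (S (S (k0 + m))) k0) with false by (symmetry; apply Nat.leb_gt; lia).
      replace (S k0 + S m)%nat with (S (S (k0 + m))) by lia. unfold Rdiv. ring. }
  assert (Hsum : forall m, sum_f_R0 f m <= s0).
  { apply growing_ineq; auto. intro n. simpl. unfold f. pose proof (nupos (S k0 + S n)%nat).
    pose proof (Rinv_0_lt_compat _ H). lra. }
  assert (HA0 : Ssum b k0 <= 2 * A0 /\ INR k0 <= A0) by (apply Hlow; lia).
  assert (Hbnd : forall J, Ssum b J <= 2 * A0 + t * s0).
  { intro J. pose proof (Smono J (S (k0 + J)) ltac:(lia)). rewrite Htail in H.
    specialize (Hsum J). assert (t * sum_f_R0 f J <= t * s0) by (apply Rmult_le_compat_l; lra). lra. }
  assert (Hterm : forall j X, 1 <= X -> RInt (fun u => lp (t * u / nu (S j)) / u ^ 2) 1 X <= b (S j)).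
  { intros j X HX. set (a := t / nu (S j)).
    assert (Ha : 0 < a) by (apply Rdiv_lt_0_compat; auto).
    rewrite (RInt_ext _ (fa a)).
    2: { intros. unfold fa, a. f_equal. f_equal. field. specialize (nupos (S j)). lra. }
    destruct (IntB a Ha X HX) as [I1 I2]. unfold b. destruct (Nat.leb (S j) k0) eqn:E.
    - apply Nat.leb_le in E. specialize (Hln1 (S j) ltac:(lia)).
      assert (lp a <= ln (t / mu (S j))).
      { apply lp_le; try lra. apply ln_le. auto. unfold a.
        specialize (Hmn (S j)). specialize (mu1 (S j)). unfold Rdiv.
        apply Rmult_le_compat_l. lra. apply Rinv_le_contravar; lra. }
      lra.
    - auto. }
  set (g := fun u => omega nu (t * u) / u ^ 2).
  assert (Hg : forall X, 1 <= X -> ex_RInt g 1 X /\ RInt g 1 X <= 2 * A0 + t * s0).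
  { intros X HX. destruct (w_eventually nu numon nunb (t * X)) as [J HJ].
    assert (Heq : forall x, Rmin 1 X < x < Rmax 1 X -> P nu (t * x) J / x ^ 2 = g x).
    { intros x Hx. rewrite Rmin_left in Hx by lra. rewrite Rmax_right in Hx by lra.
      unfold g. rewrite (omega_eq nu nu0 numon (t * x) J). auto. nra.
      intros j Hj. specialize (HJ j Hj). nra. }
    split. apply (ex_RInt_ext _ _ _ _ Heq). apply ex_Pint; auto.
    rewrite <- (RInt_ext _ _ _ _ Heq). pose proof (int_P nu t b X nupos Ht HX (fun j => Hterm j X HX) J).
    specialize (Hbnd J). lra. }
  assert (Hmono : forall X Y, 1 <= X -> X <= Y -> RInt g 1 X <= RInt g 1 Y).
  { intros X Y HX HXY. destruct (Hg Y ltac:(lra)) as [HY _]. destruct (Hg X HX) as [HX' _].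
    assert (ex_RInt g X Y) by (apply (ex_RInt_Chasles_2 g 1); auto; lra).
    rewrite <- (RInt_Chasles g 1 X Y) by auto. change (plus ?x ?y) with (x + y).
    assert (0 <= RInt g X Y).
    { apply RInt_ge_0; auto. intros x Hx. unfold g. apply Rdiv_le_0_compat.
      apply (omega_ge0 nu nu0 numon nunb). nra. apply pow_lt. lra. }
    lra. }
  set (E := fun y => exists X, 1 <= X /\ y = RInt g 1 X).
  assert (HEb : bound E).
  { exists (2 * A0 + t * s0). intros y [X [HX ->]]. apply Hg; auto. }
  assert (HEn : exists y, E y) by (exists (RInt g 1 1); exists 1; split; auto; lra).
  destruct (completeness E HEb HEn) as [L [HL1 HL2]].
  exists L. split.
  - split.
    + intros X HX. constructor. apply ex_RInt_Reals_0. apply Hg; auto.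
    + intros eps Heps.
      assert (exists X0, 1 <= X0 /\ L - eps < RInt g 1 X0).
      { apply NNPP. intro H. assert (L <= L - eps). apply HL2. intros y [X [HX ->]].
        apply Rnot_lt_le. intro. apply H. exists X. auto. lra. }
      destruct H as [X0 [HX0 HX0L]]. exists X0. split; auto.
      intros X pr HX. rewrite <- RInt_Reals. fold g.
      assert (RInt g 1 X <= L) by (apply HL1; exists X; split; auto; lra).
      pose proof (Hmono X0 X HX0 HX).
      unfold Rabs. destruct (Rcase_abs (RInt g 1 X - L)); lra.
  - assert (L <= 2 * A0 + t * s0) by (apply HL2; intros y [X [HX ->]]; apply Hg; auto).
    assert (HA0w : A0 <= omega mu t) by (apply (omega_ge mu mu0 mumon munb); auto).
    assert (Hw0 : 0 <= omega mu t) by (apply (omega_ge0 mu mu0 mumon munb); auto).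
    assert (Htm : t / mu (S k0) < e).
    { specialize (mu1 (S k0)).
      assert (t < e * mu (S k0)).
      { replace t with (e * (t / e)) at 1 by (field; lra). apply Rmult_lt_compat_l; lra. }
      apply (Rmult_lt_reg_r (mu (S k0))). lra. unfold Rdiv. rewrite Rmult_assoc, Rinv_l; lra. }
    assert (t * s0 <= C * INR (S k0) * e).
    { assert (t * s0 <= C * INR (S k0) * (t / mu (S k0))).
      { replace (C * INR (S k0) * (t / mu (S k0))) with (t * (C * INR (S k0) / mu (S k0))).
        apply Rmult_le_compat_l; lra. field. specialize (mu1 (S k0)); lra. }
      assert (0 <= C * INR (S k0)) by (apply Rmult_le_pos; [lra | apply pos_INR]).
      assert (C * INR (S k0) * (t / mu (S k0)) <= C * INR (S k0) * e) by (apply Rmult_le_compat_l; lra).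
      lra. }
    rewrite S_INR in H0. destruct HA0 as [_ HA0].
    assert (C * e * INR k0 <= C * e * omega mu t) by (apply Rmult_le_compat_l; nra).
    nra.
Qed.
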